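(* Let $p$ be a prime and $k$ a field of characteristic $p$. For any $x,y\in X$ and any monomials $u_1,\ldots,u_p$ of $k_0\langle X\rangle$, the coefficient of $(xy)^p$ in $S_p(u_1,\ldots,u_p)$ plus the coefficient of $(yx)^p$ in $S_p(u_1,\ldots,u_p)$ equals $0$.
   Context: $k_0\langle X\rangle$ is the free associative $k$-algebra (without identity) on a countably infinite set $X$; its monomials are the nonempty words in $X$, which form a $k$-basis. $S_p(v_1,\ldots,v_p)=\sum_{\sigma\in\Sigma_p}\prod_{i=1}^p v_{\sigma(i)}$, with $\Sigma_p$ the symmetric group on $p$ letters. *)

(* Defs.v *)
From mathcomp Require Import all_boot all_order all_algebra all_fingroup.
Set Implicit Arguments. Unset Strict Implicit. Unset Printing Implicit Defensive.
Import GRing.Theory.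
Local Open Scope ring_scope.

(* The countably infinite alphabet X is nat; a word (monomial of k_0<X>) is a
   nonempty seq nat.  Monomials form a k-basis of k_0<X>, and the product of
   monomials is concatenation. *)
Definition word := seq nat.

Definition perm_prod (p : nat) (u : 'I_p -> word) (s : 'S_p) : word :=
  flatten [seq u (s i) | i <- enum 'I_p].

(* coefficient of the monomial w in S_p(u_1,...,u_p) = \sum_s u_{s 1}...u_{s p}:
   since each summand is a basis monomial, this is the sum over s of
   (coefficient of w in the monomial perm_prod u s) = [perm_prod u s == w]. *)
Definition Sp_coef (k : nzRingType) (p : nat) (u : 'I_p -> word) (w : word) : k :=
  \sum_(s : 'S_p) ((perm_prod u s == w)%:R : k).

Definition wpow (w : word) (p : nat) : word := flatten (nseq p w).

(* Main.v *)
Require Import Defs.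
From mathcomp Require Import all_boot all_order all_algebra all_fingroup all_solvable zify.
Set Implicit Arguments. Unset Strict Implicit.
Import GRing.Theory.

Section Rot.
Variable n : nat.
Definition cyc : 'S_n.+1 := perm (@ordS_inj n.+1).

Lemma perm_prod_cyc (u : 'I_n.+1 -> word) (s : 'S_n.+1) :
  perm_prod u (cyc * s) = seq.rot (size (u (s ord0))) (perm_prod u s).
Proof.
rewrite /perm_prod.
have -> : [seq u ((cyc * s)%g i) | i <- enum 'I_n.+1] =
          seq.rot 1 [seq u (s i) | i <- enum 'I_n.+1].
  rewrite [in LHS]enum_ordSr [in RHS]enum_ordSl map_rcons -map_comp /= rot1_cons.
  rewrite -map_comp; congr rcons.
    apply: eq_map => i /=; rewrite permM permE; congr (u (s _)).
    by apply: val_inj; rewrite /= modn_small // ltnS.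
  by rewrite permM permE; congr (u (s _)); apply: val_inj; rewrite /= modnn.
rewrite enum_ordSl /= rot1_cons -cats1 flatten_cat /= cats0.
by rewrite rot_size_cat.
Qed.

Lemma cycX_prod (u : 'I_n.+1 -> word) (P : pred word)
  (HP : forall w, P w -> P (seq.rot 1 w)) j (s : 'S_n.+1) :
  P (perm_prod u s) -> P (perm_prod u (cyc ^+ j * s)).
Proof.
have HPm : forall m w, P w -> P (seq.rot m w).
  elim=> [|m IH] w Pw; first by rewrite rot0.
  case: (ltnP m (size w)) => hm.
    by rewrite -addn1 addnC rotD ?addn1 // HP // IH.
  by rewrite rot_oversize ?Pw // ltnW.
elim: j s => [|j IH] s; first by rewrite expg0 mul1g.
by rewrite expgS -mulgA perm_prod_cyc => /IH /HPm.
Qed.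

Lemma cycX_val j (i : 'I_n.+1) : val ((cyc ^+ j)%g i) = (i + j) %% n.+1.
Proof.
elim: j => [|j IH]; first by rewrite expg0 perm1 addn0 modn_small.
by rewrite expgSr permM permE /= IH -addn1 modnDml addn1 addnS.
Qed.

Lemma cyc_order_dvd : (cyc ^+ n.+1 = 1)%g.
Proof.
apply/permP => i; rewrite perm1; apply: val_inj.
by rewrite cycX_val modnDr modn_small.
Qed.

Lemma cyc_neq1 : 0 < n -> cyc != 1%g.
Proof.
move=> n0; apply/eqP => /permP /(_ ord0) /(congr1 val).
by rewrite permE perm1 /= modn_small.
Qed.

End Rot.

Lemma count_div (p : nat) (hp : prime p) (u : 'I_p -> word) (P : pred word)
  (HP : forall w, P w -> P (seq.rot 1 w)) :
  p %| #|[set s : 'S_p | P (perm_prod u s)]|.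
Proof.
case: p hp u => [//|n] hp u.
set S := [set s : 'S_n.+1 | P (perm_prod u s)].
have n0 : 0 < n by case: n hp {S u} => [//|].
have HQ : forall j s, P (perm_prod u (cyc n ^+ j * s)) = P (perm_prod u s).
  move=> j s; apply/idP/idP; last exact: cycX_prod.
  move=> H.
  have -> : s = (cyc n ^+ (n.+1 - j %% n.+1) * (cyc n ^+ j * s))%g.
    rewrite mulgA -expgD -(expg_mod _ (cyc_order_dvd n)).
    have -> : (n.+1 - j %% n.+1 + j) = (j %/ n.+1).+1 * n.+1.
      have := divn_eq j n.+1; have := ltn_mod j n.+1; lia.
    by rewrite modnMl expg0 mul1g.
  exact: cycX_prod.
have HS : forall a s, a \in <[cyc n]>%g -> ((a * s)%g \in S) = (s \in S).
  by move=> a s /cycleP [j ->]; rewrite !inE HQ.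
set S' := invg @^-1: S.
have -> : #|S| = #|S'| by rewrite card_preimset //; exact: invg_inj.
have ord : #[cyc n]%g = n.+1.
  apply/eqP; rewrite eqn_dvd; apply/andP; split.
    by rewrite order_dvdn cyc_order_dvd.
  have : #[cyc n]%g %| n.+1 by rewrite order_dvdn cyc_order_dvd.
  have ne1 : #[cyc n]%g != 1 by rewrite order_eq1 cyc_neq1.
  by move/(prime_nt_dvdP hp ne1) ->.
have pG : pgroup n.+1 <[cyc n]>%g by rewrite /pgroup -orderE ord pnat_id.
have act : [acts <[cyc n]>%g, on S' | 'R].
  apply/actsP => a Ha t; rewrite !inE /= invMg.
  by have := HS (a^-1)%g (t^-1)%g; rewrite !inE groupV; apply.
have := pgroup_fix_mod pG act.
have -> : #|('Fix_(S' | 'R)(<[cyc n]>))%g| = 0.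
  apply/eqP; rewrite cards_eq0; apply/eqP/setP => t; rewrite in_setI in_set0.
  apply/negbTE/negP => /andP [_ /afixP /(_ _ (cycle_id _)) /=].
  rewrite -{2}(mulg1 t) => /mulgI /eqP; by rewrite (negbTE (cyc_neq1 n0)).
by rewrite mod0n => /eqP; rewrite /dvdn.
Qed.

Lemma wpowS (a b : nat) n : wpow [:: a; b] n.+1 = a :: b :: wpow [:: a; b] n.
Proof. by []. Qed.

Lemma rcons_wpow (a b : nat) n : rcons (wpow [:: a; b] n) a = a :: wpow [:: b; a] n.
Proof. by elim: n => [//|n IH]; rewrite wpowS /= IH. Qed.

Lemma rot_wpow (a b : nat) n : seq.rot 1 (wpow [:: a; b] n.+1) = wpow [:: b; a] n.+1.
Proof. by rewrite wpowS rot1_cons rcons_cons rcons_wpow. Qed.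

Local Open Scope ring_scope.

Lemma Sp_coefE (k : nzRingType) p (u : 'I_p -> word) w :
  Sp_coef k u w = (#|[set s : 'S_p | perm_prod u s == w]|)%:R.
Proof.
rewrite /Sp_coef -natr_sum -sum1_card; congr (_%:R).
rewrite [RHS]big_mkcond /=.
by apply: eq_bigr => s _; rewrite inE; case: (_ == _).
Qed.


Theorem lemma5p1 (p : nat) (k : fieldType) (hp : prime p) (hchar : p \in [pchar k])
  (x y : nat) (u : 'I_p -> word) (hu : forall i, u i != [::]) :
  Sp_coef k u (wpow [:: x; y] p) + Sp_coef k u (wpow [:: y; x] p) = 0.
Proof.
rewrite !Sp_coefE -natrD.
suff [q ->] : exists q, (#|[set s : 'S_p | perm_prod u s == wpow [:: x; y] p]| +
   #|[set s : 'S_p | perm_prod u s == wpow [:: y; x] p]|)%N = (q * p)%N.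
  by rewrite natrM (pcharf0 hchar) mulr0.
apply/dvdnP.
case: p hp hchar u hu => [//|n] hp hchar u hu.
case: (eqVneq x y) => [<-|nxy].
  rewrite addnn -muln2 dvdn_mulr //.
  by apply: (@count_div _ hp u (fun w => w == wpow [:: x; x] n.+1)) => w /eqP ->; rewrite rot_wpow.
rewrite -cardsUI.
have -> : [set s : 'S_n.+1 | perm_prod u s == wpow [:: x; y] n.+1] :&:
          [set s | perm_prod u s == wpow [:: y; x] n.+1] = set0.
  apply/setP => s; rewrite !inE; apply/negbTE/negP => /andP [/eqP -> /eqP].
  by rewrite !wpowS => -[] /eqP; rewrite (negbTE nxy).
rewrite cards0 addn0.
have -> : [set s : 'S_n.+1 | perm_prod u s == wpow [:: x; y] n.+1] :|:
          [set s | perm_prod u s == wpow [:: y; x] n.+1] =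
          [set s | (fun w => (w == wpow [:: x; y] n.+1) || (w == wpow [:: y; x] n.+1))
                     (perm_prod u s)].
  by apply/setP => s; rewrite !inE.
apply: (@count_div _ hp u (fun w => (w == wpow [:: x; y] n.+1) || (w == wpow [:: y; x] n.+1))) => w.
case/orP => /eqP ->; rewrite rot_wpow.
  by rewrite [X in _ || X]eqxx orbT.
by rewrite [X in X || _]eqxx.
Qed.
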